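(* The set $\overline{T(\mathbf I)}$ is nowhere dense in $S(\mathbf I)$.
   Context: $\mathbf I=[0,1]$; $C(\mathbf I)$ is the space of continuous self-maps of $\mathbf I$ with the supremum metric; $S(\mathbf I)\subset C(\mathbf I)$ is the subspace of surjective maps; $T(\mathbf I)$ is the set of transitive maps ($f$ is transitive if for all non-empty open $U,V\subset\mathbf I$ there is $n\ge1$ with $U\cap f^{-n}(V)\ne\emptyset$) and $\overline{T(\mathbf I)}$ its closure in $C(\mathbf I)$ (which is contained in $S(\mathbf I)$). *)

(* Defs.v *)
From HB Require Import structures.
From mathcomp Require Import all_boot all_order all_algebra.
From mathcomp Require Import all_classical all_reals all_analysis.
Set Implicit Arguments. Unset Strict Implicit. Unset Printing Implicit Defensive.
Import Order.TTheory GRing.Theory Num.Theory numFieldNormedType.Exports.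
Local Open Scope classical_set_scope.
Local Open Scope ring_scope.

Section Defs.
Variable R : realType.

Definition unitI : set R := `[0, 1]%classic.

(* C(I): continuous self-maps of I (represented by functions R -> R; only the
   values on I matter). *)
Definition CI : set (R -> R) :=
  [set f : R -> R | {within unitI, continuous f} /\ (forall x, unitI x -> unitI (f x))].

Definition SI : set (R -> R) :=
  [set f | CI f /\ (forall y, unitI y -> exists2 x, unitI x & f x = y)].

Definition supdist (f g : R -> R) : R :=
  sup [set `|f x - g x| | x in unitI].

Definition openI (U : set R) : Prop :=
  exists2 O : set R, open O & U = unitI `&` O.

Definition transitive (f : R -> R) : Prop :=
  forall U V : set R, openI U -> openI V -> U !=set0 -> V !=set0 ->
    exists2 n : nat, (1 <= n)%N &
      (U `&` [set x | unitI x /\ V (iter n f x)]) !=set0.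

Definition TI : set (R -> R) := [set f | CI f /\ transitive f].

Definition closure_in (X A : set (R -> R)) : set (R -> R) :=
  [set f | X f /\ forall e : R, 0 < e -> exists2 g, (X `&` A) g & supdist f g < e].

Definition interior_in (X A : set (R -> R)) : set (R -> R) :=
  [set f | X f /\ exists2 e : R, 0 < e &
     forall g, X g -> supdist f g < e -> A g].

Definition nowhere_dense_in (X A : set (R -> R)) : Prop :=
  interior_in X (closure_in X A) = set0.

End Defs.

(* Main.v *)
Require Import Defs.
From mathcomp Require Import all_boot all_order all_algebra.
From mathcomp Require Import all_classical all_reals all_analysis.
From mathcomp Require Import ring lra.
Import Order.TTheory GRing.Theory Num.Theory numFieldNormedType.Exports.
Local Open Scope classical_set_scope.
Local Open Scope ring_scope.

Definition psi {R : realFieldType} (a b p d : R) (y : R) : R :=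
  p + a * Num.min 0 (y - p + d) + b * Num.max 0 (y - p - d).

Definition psi_hyp {R : realFieldType} (a b p d : R) : Prop :=
  [/\ 0 < d, 0 <= p, p <= 1, (0 < p -> a * (p - d) = p /\ 1 <= a) &
      (p < 1 -> b * (1 - p - d) = 1 - p /\ 1 <= b)].

Lemma psi_mid {R : realFieldType} (a b p d y : R) :
  p - d <= y -> y <= p + d -> psi a b p d y = p.
Proof.
move=> h1 h2; rewrite /psi min_l ?max_l; [by rewrite !mulr0 !addr0| lra | lra].
Qed.

Lemma psi_cases {R : realFieldType} {a b p d y : R} : psi_hyp a b p d ->
  0 <= y -> y <= 1 ->
  (0 <= psi a b p d y <= 1) /\ (- d <= psi a b p d y - y <= d).
Proof.
case=> d0 p0 p1 Ha Hb y0 y1; rewrite /psi.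
case: (boolP (y <= p - d)) => h1; last rewrite -ltNge in h1.
  have pp : 0 < p by lra.
  have [e1 e2] := Ha pp.
  rewrite min_r ?max_l; [|lra|lra]. rewrite mulr0 addr0.
  have -> : p + a * (y - p + d) = a * y.
    have -> : y - p + d = y - (p - d) by ring.
    rewrite mulrBr e1; ring.
  have k1 : a * y <= a * (p - d) by apply: ler_wpM2l; lra.
  have k2 : (a - 1) * y <= (a - 1) * (p - d) by apply: ler_wpM2l; lra.
  have k3 : 0 <= (a - 1) * y by apply: mulr_ge0; lra.
  split; nra.
case: (boolP (y <= p + d)) => h2; last rewrite -ltNge in h2.
  rewrite min_l ?max_l; [|lra|lra]. rewrite !mulr0 !addr0. lra.
have pp : p < 1 by lra.
have [e1 e2] := Hb pp.
rewrite min_l ?max_r; [|lra|lra]. rewrite mulr0 addr0.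
have k1 : b * (y - p - d) <= b * (1 - p - d) by apply: ler_wpM2l; lra.
have k2 : (b - 1) * (y - p - d) <= (b - 1) * (1 - p - d) by apply: ler_wpM2l; lra.
have k3 : 0 <= (b - 1) * (y - p - d) by apply: mulr_ge0; lra.
split; nra.
Qed.

Lemma psi0 {R : realFieldType} {a b p d : R} : psi_hyp a b p d -> psi a b p d 0 = 0.
Proof.
case=> d0 p0 p1 Ha Hb; rewrite /psi.
case: (boolP (0 < p)) => pp; last rewrite -leNgt in pp.
  have [e1 e2] := Ha pp.
  have h : d < p by nra.
  rewrite min_r ?max_l; [|lra|lra]. rewrite mulr0 addr0.
  have -> : 0 - p + d = - (p - d) by ring.
  rewrite mulrN e1; ring.
have -> : p = 0 by lra.
rewrite min_l ?max_l; [|lra|lra]. rewrite !mulr0 !addr0. lra.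
Qed.

Lemma psi1 {R : realFieldType} {a b p d : R} : psi_hyp a b p d -> psi a b p d 1 = 1.
Proof.
case=> d0 p0 p1 Ha Hb; rewrite /psi.
case: (boolP (p < 1)) => pp; last rewrite -leNgt in pp.
  have [e1 e2] := Hb pp.
  have h : d < 1 - p by nra.
  rewrite min_l ?max_r; [|lra|lra]. rewrite mulr0 addr0 e1; ring.
have -> : p = 1 by lra.
rewrite min_l ?max_l; [|lra|lra]. rewrite !mulr0 !addr0. lra.
Qed.

Lemma psi_cont {R : realType} (a b p d : R) : continuous (psi a b p d).
Proof.
move=> x; rewrite /psi.
have hid : {for x, continuous (fun y : R => y)} by exact: cvg_id.
apply: cvgD; first apply: cvgD.
- exact: cvg_cst.
- apply: cvgM; first exact: cvg_cst.
  have := @continuous_min R R (fun=> 0) (fun y => y - p + d) x (@cvg_cst _ _ _ _ _).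
  apply; apply: cvgD; last exact: cvg_cst.
  apply: cvgB; last exact: cvg_cst. exact: hid.
- apply: cvgM; first exact: cvg_cst.
  have := @continuous_max R R (fun=> 0) (fun y => y - p - d) x (@cvg_cst _ _ _ _ _).
  apply; apply: cvgB; last exact: cvg_cst.
  apply: cvgB; last exact: cvg_cst. exact: hid.
Qed.

Lemma cont_eps {R : realType} {f : R -> R} {A : set R} {p : R} :
  {within A, continuous f} -> A p -> forall e : R, 0 < e ->
  exists2 r : R, 0 < r & forall x, A x -> `|x - p| < r -> `|f x - f p| < e.
Proof.
move=> fc Ap e e0.
have := (proj1 (subspace_continuousP A f) fc p Ap).
move/cvgrPdist_lt/(_ e e0); rewrite near_withinE.
case/nbhs_ballP => r r0 H; exists r => // x Ax xp.
rewrite distrC; apply: (H x) => //.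
by rewrite /ball /= distrC.
Qed.

Lemma unitIP (R : realType) (x : R) : unitI x <-> 0 <= x <= 1.
Proof. by rewrite /unitI /= in_itv. Qed.

Lemma supdist_le {R : realType} (f g : R -> R) (c : R) :
  (forall x, unitI x -> `|f x - g x| <= c) -> supdist f g <= c.
Proof.
move=> H; apply: ge_sup.
  exists `|f 0 - g 0|, 0 => //; apply/unitIP; lra.
by move=> _ [x Ix <-]; apply: H.
Qed.

Lemma supdist_ge {R : realType} {f g : R -> R} {x : R} :
  (forall y, unitI y -> unitI (f y)) -> (forall y, unitI y -> unitI (g y)) ->
  unitI x -> `|f x - g x| <= supdist f g.
Proof.
move=> fI gI Ix; apply: ub_le_sup; last by exists x.
exists 1 => _ [y Iy <-].
have /unitIP h1 := fI y Iy; have /unitIP h2 := gI y Iy.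
move: h1 h2 => /andP[h1 h1'] /andP[h2 h2'].
rewrite ler_norml; apply/andP; split; lra.
Qed.

Lemma fixed_point {R : realType} (f : R -> R) :
  CI f -> exists2 p, unitI p & f p = p.
Proof.
case=> fc fI.
have hc : {within `[0, 1], continuous (fun x => x - f x)}.
  move=> x; apply: cvgB; last exact: fc.
  exact: incl_subspace_continuous.
have I0 : unitI (0:R) by apply/unitIP; lra.
have I1 : unitI (1:R) by apply/unitIP; lra.
have /unitIP/andP[a0 a1] := fI 0 I0.
have /unitIP/andP[b0 b1] := fI 1 I1.
have [|c c01 hc0] := @IVT R (fun x => x - f x) 0 1 0 ler01 hc.
  apply/andP; split.
    by rewrite ge_min; apply/orP; left; lra.
  by rewrite le_max; apply/orP; right; lra.
exists c; first by apply/unitIP; rewrite in_itv /= in c01.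
by move: hc0 => /eqP; rewrite subr_eq0 => /eqP.
Qed.

Lemma small_pos {R : realType} {u v : R} : 0 < u -> 0 < v ->
  exists d : R, [/\ 0 < d, d < u & d < v].
Proof.
move=> u0 v0; exists (Num.min u v / 2).
have m0 : 0 < Num.min u v by rewrite lt_min u0 v0.
have mu : Num.min u v <= u by rewrite ge_min lexx.
have mv : Num.min u v <= v by rewrite ge_min lexx orbT.
split; lra.
Qed.

Theorem theorem6 (R : realType) :
  nowhere_dense_in (@SI R) (closure_in (@CI R) (@TI R)).
Proof.
rewrite /nowhere_dense_in; apply/seteqP; split => // f [[[fc fI] fsurj] [e e0 Hint]].
have [p Ip fp] := @fixed_point R f (conj fc fI).
have /unitIP/andP[p0 p1] := Ip.
have [v [v0 hv]] : exists v : R, 0 < v /\ (0 < p -> v <= p).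
  have [h|h] := ltrP 0 p; [exists p | exists 1]; split; lra.
have [w [w0 hw]] : exists w : R, 0 < w /\ (p < 1 -> w <= 1 - p).
  have [h|h] := ltrP p 1; [exists (1 - p) | exists 1]; split; lra.
have [d1 [d10 d1e d1v]] := small_pos e0 v0.
have [d [d0 dd1 dw]] := small_pos d10 w0.
set a := p / (p - d).
set b := (1 - p) / (1 - p - d).
have Hpsi : psi_hyp a b p d.
  split => //.
    move=> pp; have pd : 0 < p - d by have := hv pp; lra.
    split; first by rewrite /a divfK // gt_eqF.
    by rewrite /a ler_pdivlMr // mul1r; lra.
  move=> pp; have pd : 0 < 1 - p - d by have := hw pp; lra.
  split; first by rewrite /b divfK // gt_eqF.
  by rewrite /b ler_pdivlMr // mul1r; lra.
set g := psi a b p d \o f.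
have gI : forall x, unitI x -> unitI (g x).
  move=> x Ix; have /unitIP/andP[y0 y1] := fI x Ix.
  have [h _] := psi_cases Hpsi y0 y1.
  by apply/unitIP.
have gc : {within @unitI R, continuous g}.
  move=> x; apply: (@continuous_comp _ _ _ (from_subspace (@unitI R) f) (psi a b p d) x (fc x) (psi_cont _ _ _ _ _)).
have gsurj : forall y, unitI y -> exists2 x, unitI x & g x = y.
  move=> y /unitIP/andP[y0 y1].
  have [||c c01 hc] := @IVT R (psi a b p d) 0 1 y ler01.
      exact: continuous_subspaceT (@psi_cont R a b p d).
    rewrite (psi0 Hpsi) (psi1 Hpsi); apply/andP; split.
      by rewrite ge_min; apply/orP; left.
    by rewrite le_max; apply/orP; right.
  have Ic : unitI c by apply/unitIP; rewrite in_itv /= in c01.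
  have [x Ix fx] := fsurj c Ic.
  by exists x => //; rewrite /g /= fx.
have SIg : SI g by split => //; split.
have dist : supdist f g < e.
  have : supdist f g <= d.
    apply: supdist_le => x Ix.
    have /unitIP/andP[y0 y1] := fI x Ix.
    have [_ /andP[h1 h2]] := psi_cases Hpsi y0 y1.
    rewrite /g /= ler_norml; apply/andP; split; lra.
  lra.
have [CIg Hcl] := Hint g SIg dist.
have [r r0 Hr] := cont_eps fc Ip d d0.
have h12 : (0:R) < 1/2 by lra.
have [s [s0 sr s12]] := small_pos r0 h12.
have key : forall x, unitI x -> `|x - p| < s -> g x = p.
  move=> x Ix xs.
  have := Hr x Ix (lt_trans xs sr); rewrite fp ltr_norml => /andP[h1 h2].
  rewrite /g /=; apply: psi_mid; lra.
have s20 : 0 < s / 2 by lra.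
have [h [_ [[hc hI] Hh]] dh] := Hcl (s / 2) s20.
have [g' [CIg' [_ tg']] dg'] := Hh (s / 2) s20.
have [g'c g'I] := CIg'.
have inv : forall x, unitI x -> `|x - p| < s -> unitI (g' x) /\ `|g' x - p| < s.
  move=> x Ix xs; split; first exact: g'I.
  have := supdist_ge gI hI Ix; rewrite key // => k1.
  have k2 := supdist_ge hI g'I Ix.
  have k3 := ler_normD (p - h x) (h x - g' x).
  have k4 : p - h x + (h x - g' x) = p - g' x by ring.
  rewrite k4 in k3.
  rewrite distrC; lra.
have iterinv : forall n x, unitI x -> `|x - p| < s ->
    unitI (iter n g' x) /\ `|iter n g' x - p| < s.
  elim => [|n IH] x Ix xs /=; first by split.
  have [h1 h2] := IH x Ix xs.
  exact: inv.
set U := @unitI R `&` ball p s.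
set V := @unitI R `&` ([set x | x < p - s] `|` [set x | p + s < x]).
have oU : Defs.openI U by exists (ball p s) => //; exact: ball_open.
have oV : Defs.openI V.
  exists ([set x | x < p - s] `|` [set x | p + s < x]) => //.
  by apply: openU; [exact: open_lt | exact: open_gt].
have nU : U !=set0 by exists p; split => //; exact: ballxx.
have nV : V !=set0.
  have [hh|hh] := lerP p (1/2).
    exists 1; split; first by apply/unitIP; lra.
    by right => /=; lra.
  exists 0; split; first by apply/unitIP; lra.
  by left => /=; lra.
have [n n1 [x [[Ix Bx] [_ Vx]]]] := tg' U V oU oV nU nV.
have xs : `|x - p| < s by rewrite distrC.
have [_] := iterinv n x Ix xs.
rewrite ltr_norml => /andP[h1 h2].
by case: Vx => /= hh; lra.
Qed.
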